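(* Let $\sigma$ be a $2\times 2$ Hermitian matrix of the form $\sigma=n_x\sigma_x+n_y\sigma_y+n_z\sigma_z$ with $(n_x,n_y,n_z)\in\mathbb{R}^3$ a unit vector (so $\sigma^2=I$ and $\mathrm{Tr}\,\sigma=0$), acting on a qubit system $C$. Consider the tripartite graph state $|h_3\rangle=CZ_{(a,b)}CZ_{(a,c)}|+\rangle^{\otimes 3}$ on qubits $a$ (controller Alice), $b$ (Bob), $c$ (Charlie), after Charlie applies $U_{c,C}=|0\rangle\langle0|_c\otimes I_C+|1\rangle\langle1|_c\otimes\sigma$, giving the hybrid object $$S=\tfrac12|+\rangle_a\big(|00\rangle_{bc}\otimes I_C+|11\rangle_{bc}\otimes\sigma\big)+\tfrac12|-\rangle_a\big(|10\rangle_{bc}\otimes I_C+|01\rangle_{bc}\otimes\sigma\big).$$ Without Alice's participation, Bob and Charlie choose orthonormal bases $\{|\beta_1\rangle,|\beta_2\rangle\}$ and $\{|\gamma_1\rangle,|\gamma_2\rangle\}$ of $\mathbb{C}^2$ and measure qubits $b$ and $c$ in them. For outcome $(j,k)$, set $c_{st}=\langle\beta_j|s\rangle\langle\gamma_k|t\rangle$ ($s,t\in\{0,1\}$); the residual object is $$T_{jk}=\tfrac12|+\rangle_a\otimes(c_{00}I_C+c_{11}\sigma)+\tfrac12|-\rangle_a\otimes(c_{10}I_C+c_{01}\sigma),$$ and each outcome $(j,k)$ occurs with probability $p(j,k)=\frac14\sum_{s,t}|c_{st}|^2=\frac14$. Say outcome $(j,k)$ realizes $e^{i\alpha\sigma}$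 if $T_{jk}=|\chi\rangle_a\otimes\lambda\, e^{i\alpha\sigma}$ for some nonzero vector $|\chi\rangle\in\mathbb{C}^2$ and nonzero scalar $\lambda\in\mathbb{C}$; the success rate for $\alpha$ (for a given choice of bases) is the total probability of outcomes that realize $e^{i\alpha\sigma}$. Then, for $\alpha\in[0,2\pi)$, the remote operation $e^{i\alpha\sigma}$ can be realized probabilistically in this way, with success rate (maximized over the choice of bases) equal to $50\%$ for $\alpha\in\{0,\frac{\pi}{4},\frac{\pi}{2},\frac{3\pi}{4},\pi,\frac{5\pi}{4},\frac{3\pi}{2},\frac{7\pi}{4}\}$, and equal to $25\%$ for $\alpha\in\bigcup_{m=0}^{7}\big(\frac{m\pi}{4},\frac{(m+1)\pi}{4}\big)$.
   Context: $|\pm\rangle=(|0\rangle\pm|1\rangle)/\sqrt2$; $\sigma_x,\sigma_y,\sigma_z$ are the Pauli matrices; $CZ_{(a,b)}$ is the controlled-$Z$ gate $\mathrm{diag}(1,1,1,-1)$ on qubits $a,b$. Note $e^{i\alpha\sigma}=\cos\alpha\, I+i\sin\alpha\,\sigma$, so $e^{i\alpha\sigma}$ and $e^{i(\alpha+\pi)\sigma}$ are proportional. In the paper's protocol, with Alice's cooperation (an $X$-basis measurement of qubit $a$ plus classical communication) the operation $e^{i\alpha\sigma}$ on an unknown state of $C$ can be implemented deterministically; this proposition quantifies what Bob and Charlie alone can achieve by local rank-one projective measurements on $b$ and $c$ that disentangle qubit $a$. *)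

(* Defs.v *)
From HB Require Import structures.
From mathcomp Require Import all_boot all_order all_algebra.
From mathcomp Require Import complex.
From mathcomp Require Import boolp reals trigo.
Set Implicit Arguments. Unset Strict Implicit. Unset Printing Implicit Defensive.
Import Order.TTheory GRing.Theory Num.Theory.
Local Open Scope ring_scope.

Section Defs.
Variable R : realType.
Local Notation C := (R[i]).

Definition rC (x : R) : C := Complex x 0.
Definition iC : C := Complex 0 1.

Definition sigma_x : 'M[C]_2 := \matrix_(i < 2, j < 2) (if i == j then 0 else 1).
Definition sigma_y : 'M[C]_2 :=
  \matrix_(i < 2, j < 2)
    (if i == j then 0 else if (i == 0 :> nat) then - iC else iC).
Definition sigma_z : 'M[C]_2 :=
  \matrix_(i < 2, j < 2) (if i == j then (if (i == 0 :> nat) then 1 else -1) else 0).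

Definition sigma_n (nx ny nz : R) : 'M[C]_2 :=
  rC nx *: sigma_x + rC ny *: sigma_y + rC nz *: sigma_z.

(* e^{i alpha sigma} = cos alpha I + i sin alpha sigma  (valid since sigma^2 = I) *)
Definition exp_i_sigma (alpha : R) (sigma : 'M[C]_2) : 'M[C]_2 :=
  rC (cos alpha) *: 1%:M + (iC * rC (sin alpha)) *: sigma.

Definition ket (s : 'I_2) : 'cV[C]_2 := \col_(i < 2) (if i == s then 1 else 0).
Definition ket_plus : 'cV[C]_2 := \col_(i < 2) (rC (Num.sqrt 2))^-1.
Definition ket_minus : 'cV[C]_2 :=
  \col_(i < 2) (if (i == 0 :> nat) then (rC (Num.sqrt 2))^-1 else - (rC (Num.sqrt 2))^-1).

Definition braket (u v : 'cV[C]_2) : C := \sum_(i < 2) conjc (u i 0) * v i 0.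

Definition orthonormal_basis (b : 'I_2 -> 'cV[C]_2) : Prop :=
  forall j k : 'I_2, braket (b j) (b k) = (if j == k then 1 else 0).

Definition coef (beta gamma : 'I_2 -> 'cV[C]_2) (j k s t : 'I_2) : C :=
  braket (beta j) (ket s) * braket (gamma k) (ket t).

(* residual object T_{jk}: an element of C^2_a (x) M_2(C); it is represented by
   its components along the computational basis |0>_a, |1>_a of qubit a:
   T_{jk} = sum_i |i>_a (x) (T i). *)
Definition residual (sigma : 'M[C]_2) (beta gamma : 'I_2 -> 'cV[C]_2) (j k : 'I_2)
    : 'I_2 -> 'M[C]_2 :=
  let c := coef beta gamma j k in
  fun i => (2%:R^-1 * ket_plus i 0) *: (c 0 0 *: 1%:M + c 1 1 *: sigma)
         + (2%:R^-1 * ket_minus i 0) *: (c 1 0 *: 1%:M + c 0 1 *: sigma).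

Definition realizes (sigma : 'M[C]_2) (beta gamma : 'I_2 -> 'cV[C]_2)
    (alpha : R) (j k : 'I_2) : Prop :=
  exists (chi : 'cV[C]_2) (lambda : C), chi != 0 /\ lambda != 0 /\
    forall i : 'I_2, residual sigma beta gamma j k i
                     = (chi i 0 * lambda) *: exp_i_sigma alpha sigma.

Definition sqmod (z : C) : R := complex.Re z ^+ 2 + complex.Im z ^+ 2.

Definition prob (beta gamma : 'I_2 -> 'cV[C]_2) (j k : 'I_2) : R :=
  4%:R^-1 * \sum_(s < 2) \sum_(t < 2) sqmod (coef beta gamma j k s t).

Definition success_rate (sigma : 'M[C]_2) (beta gamma : 'I_2 -> 'cV[C]_2)
    (alpha : R) : R :=
  \sum_(j < 2) \sum_(k < 2)
     (if `[< realizes sigma beta gamma alpha j k >] then prob beta gamma j k else 0).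

Definition max_success_rate (sigma : 'M[C]_2) (alpha r : R) : Prop :=
  (exists beta gamma, orthonormal_basis beta /\ orthonormal_basis gamma /\
       success_rate sigma beta gamma alpha = r)
  /\ (forall beta gamma, orthonormal_basis beta -> orthonormal_basis gamma ->
       success_rate sigma beta gamma alpha <= r).

End Defs.

(* Main.v *)
Require Import Defs.
From HB Require Import structures.
From mathcomp Require Import all_boot all_order all_algebra.
From mathcomp Require Import complex.
From mathcomp Require Import boolp reals trigo.
From mathcomp Require Import ring lra.
Import Order.TTheory GRing.Theory Num.Theory.
Local Open Scope ring_scope.
Section P.
Variable R : realType.
Local Notation C := R[i].
Local Notation I := (iC R).

Lemma rCM (x y : R) : rC (x * y) = rC x * rC y.
Proof. by change (real_complex R (x*y) = real_complex R x * real_complex R y); rewrite rmorphM. Qed.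
Lemma rCD (x y : R) : rC (x + y) = rC x + rC y.
Proof. by change (real_complex R (x+y) = real_complex R x + real_complex R y); rewrite rmorphD. Qed.
Lemma rC_inj : injective (@rC R).
Proof. by move=> x y []. Qed.
Lemma rC1 : rC 1 = 1 :> C. Proof. by []. Qed.
Lemma rC0 : rC 0 = 0 :> C. Proof. by []. Qed.
Lemma conj_rC (x : R) : conjc (rC x) = rC x.
Proof. by rewrite /rC /conjc oppr0. Qed.
Lemma I2 : I * I = -1.
Proof. by rewrite /iC; simpc. Qed.
Lemma I_neq0 : I != 0.
Proof. by apply/eqP => /(congr1 (@complex.Im R)) /= /eqP; rewrite oner_eq0. Qed.
Lemma conjI : conjc I = - I.
Proof. by rewrite /iC; simpc. Qed.

Lemma sum2 (F : 'I_2 -> C) : \sum_(i < 2) F i = F 0 + F 1.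
Proof. rewrite big_ord_recl big_ord1; congr (_ + F _); exact: val_inj. Qed.

Lemma braket_ket (u : 'cV[C]_2) (s : 'I_2) : braket u (ket R s) = conjc (u s 0).
Proof.
rewrite /braket sum2 !mxE.
by case: s => -[|[|//]] ? /=; rewrite ?mulr1 ?mulr0 ?addr0 ?add0r; congr (conjc (u _ 0)); exact: val_inj.
Qed.

Definition hh : C := (rC (Num.sqrt 2))^-1.
Lemma kpE i : ket_plus R i 0 = hh. Proof. by rewrite mxE. Qed.
Lemma km0E : ket_minus R 0 0 = hh. Proof. by rewrite mxE. Qed.
Lemma km1E : ket_minus R 1 0 = - hh. Proof. by rewrite mxE. Qed.
Lemma sqrt2_neq0 : Num.sqrt (2 : R) != 0.
Proof. by rewrite gt_eqF // sqrtr_gt0 ltr0n. Qed.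
Lemma hh_neq0 : hh != 0.
Proof. rewrite invr_eq0; apply/eqP => /(congr1 (@complex.Re R)) /= h. by move: sqrt2_neq0; rewrite h eqxx. Qed.
Lemma hh2 : hh * hh = 2^-1.
Proof.
rewrite /hh -invfM -rCM -expr2 sqr_sqrtr ?ler0n //; congr (_^-1).
by change (real_complex R 2%:R = 2%:R); rewrite rmorph_nat.
Qed.
Lemma two_neq0 : (2%:R : C) != 0. Proof. by rewrite pnatr_eq0. Qed.

Lemma lc1 (c1 : C) {a1 b1 g1 g2 : C} : a1 = b1 -> g1 - g2 = c1 * (a1 - b1) -> g1 = g2.
Proof. by move=> -> ; rewrite subrr mulr0 => /eqP; rewrite subr_eq0 => /eqP. Qed.
Lemma lc2 (c1 c2 : C) {a1 b1 a2 b2 g1 g2 : C} : a1 = b1 -> a2 = b2 ->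
  g1 - g2 = c1 * (a1 - b1) + c2 * (a2 - b2) -> g1 = g2.
Proof. by move=> -> ->; rewrite !subrr !mulr0 addr0 => /eqP; rewrite subr_eq0 => /eqP. Qed.

Lemma comb (S : 'M[C]_2) a b x y x' y' :
  a *: (x *: 1%:M + y *: S) + b *: (x' *: 1%:M + y' *: S) =
  (a*x + b*x') *: 1%:M + (a*y + b*y') *: S.
Proof. apply/matrixP => p q; rewrite !mxE; ring. Qed.
Lemma comb1 (S : 'M[C]_2) a x y :
  a *: (x *: 1%:M + y *: S) = (a*x) *: 1%:M + (a*y) *: S.
Proof. apply/matrixP => p q; rewrite !mxE; ring. Qed.

Variables nx ny nz : R.
Hypothesis hn : nx ^+ 2 + ny ^+ 2 + nz ^+ 2 = 1.
Local Notation sg := (sigma_n nx ny nz).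

Lemma combE (S : 'M[R[i]]_2) x y p q : (x *: 1%:M + y *: S) p q = x * (1%:M : 'M[R[i]]_2) p q + y * S p q.
Proof. by rewrite !mxE. Qed.
Lemma sg00 : sg 0 0 = rC nz. Proof. rewrite /sigma_n !mxE /=. ring. Qed.
Lemma sg11 : sg 1 1 = - rC nz. Proof. rewrite /sigma_n !mxE /=. ring. Qed.
Lemma sg01 : sg 0 1 = rC nx - rC ny * I. Proof. rewrite /sigma_n !mxE /=. ring. Qed.
Lemma sg10 : sg 1 0 = rC nx + rC ny * I. Proof. rewrite /sigma_n !mxE /=. ring. Qed.
Lemma id00 : (1%:M : 'M[R[i]]_2) 0 0 = 1. Proof. by rewrite mxE. Qed.
Lemma id11 : (1%:M : 'M[R[i]]_2) 1 1 = 1. Proof. by rewrite mxE. Qed.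
Lemma id01 : (1%:M : 'M[R[i]]_2) 0 1 = 0. Proof. by rewrite mxE. Qed.
Lemma id10 : (1%:M : 'M[R[i]]_2) 1 0 = 0. Proof. by rewrite mxE. Qed.

Lemma indep x y x' y' : x *: 1%:M + y *: sg = x' *: 1%:M + y' *: sg -> x = x' /\ y = y'.
Proof.
move=> H.
move/matrixP: H => H.
have e00 := H 0 0; have e11 := H 1 1; have e01 := H 0 1; have e10 := H 1 0.
rewrite !combE sg00 id00 in e00; rewrite !combE sg11 id11 in e11.
rewrite !combE sg01 id01 in e01; rewrite !combE sg10 id10 in e10.
have a1 : 2%:R * ((y - y') * rC nz) = 0 by eapply (lc2 1 (-1) e00 e11); ring.
have a2 : 2%:R * ((y - y') * rC nx) = 0 by eapply (lc2 1 1 e01 e10); ring.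
have a3 : 2%:R * ((y - y') * (rC ny * I)) = 0 by eapply (lc2 (-1) 1 e01 e10); ring.
have [yy|fn] := eqVneq y y'.
  by subst y'; split=> //; eapply (lc1 1 e00); ring.
exfalso; rewrite -subr_eq0 in fn.
have z0 : forall a : C, 2%:R * ((y - y') * a) = 0 -> a = 0.
  by move=> a /eqP; rewrite !mulf_eq0 (negbTE two_neq0) (negbTE fn) /= => /eqP.
move/z0: a1 => /rC_inj Hz; move/z0: a2 => /rC_inj Hx.
move/z0/eqP: a3; rewrite mulf_eq0 (negbTE I_neq0) orbF => /eqP /rC_inj Hy.
by move: hn; rewrite Hx Hy Hz expr0n /= !addr0 => /eqP; rewrite eq_sym oner_eq0.
Qed.

Lemma lc4 (c1 c2 c3 c4 : C) {a1 b1 a2 b2 a3 b3 a4 b4 g1 g2 : C} : a1 = b1 -> a2 = b2 -> a3 = b3 -> a4 = b4 ->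
  g1 - g2 = c1 * (a1 - b1) + c2 * (a2 - b2) + c3 * (a3 - b3) + c4 * (a4 - b4) -> g1 = g2.
Proof. by move=> -> -> -> ->; rewrite !subrr !mulr0 !addr0 => /eqP; rewrite subr_eq0 => /eqP. Qed.

Lemma coefE (β γ : 'I_2 -> 'cV[C]_2) (j k s t : 'I_2) : coef β γ j k s t = conjc (β j s 0) * conjc (γ k t 0).
Proof. by rewrite /coef !braket_ket. Qed.

Variable α : R.
Local Notation e0 := (rC (cos α)).
Local Notation e1 := (I * rC (sin α)).
Definition Pr (b0 b1 g0 g1 : C) := b0*g0*e1 = b1*g1*e0 /\ b1*g0*e1 = b0*g1*e0.

Lemma Pr_of (q A0 A1 B0 B1 k0 k1 : C) : q != 0 ->
  q * A0 + q * B0 = k0 * e0 -> q * A1 + q * B1 = k0 * e1 ->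
  q * A0 + - q * B0 = k1 * e0 -> q * A1 + - q * B1 = k1 * e1 ->
  A0*e1 = A1*e0 /\ B0*e1 = B1*e0.
Proof.
move=> qn h1 h2 h3 h4.
have t1 : 2%:R * q * (A0*e1 - A1*e0) = 0.
  by eapply (lc4 e1 (-e0) e1 (-e0) h1 h2 h3 h4); ring.
have t2 : 2%:R * q * (B0*e1 - B1*e0) = 0.
  by eapply (lc4 e1 (-e0) (-e1) e0 h1 h2 h3 h4); ring.
move/eqP: t1; move/eqP: t2; rewrite !mulf_eq0 (negbTE two_neq0) (negbTE qn) /= !subr_eq0.
by move=> /eqP -> /eqP ->.
Qed.

Lemma realizes_Pr (β γ : 'I_2 -> 'cV[C]_2) (j k : 'I_2) : realizes sg β γ α j k ->
  Pr (conjc (β j 0 0)) (conjc (β j 1 0)) (conjc (γ k 0 0)) (conjc (γ k 1 0)).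
Proof.
case=> chi [lam [_ [_ H]]].
have H0 := H 0; have H1 := H 1.
rewrite /residual /exp_i_sigma !coefE comb comb1 in H0.
rewrite /residual /exp_i_sigma !coefE comb comb1 in H1.
case/indep: H0 => X0 Y0; case/indep: H1 => X1 Y1.
rewrite !kpE km0E km1E mulrN in X0 Y0 X1 Y1.
have qn : 2^-1 * hh != 0 by rewrite mulf_eq0 negb_or invr_eq0 two_neq0 hh_neq0.
by case: (Pr_of _ _ _ _ _ _ _ qn X0 Y0 X1 Y1).
Qed.

Lemma e_nz : (e0 != 0) || (e1 != 0).
Proof.
rewrite -negb_and; apply/negP => /andP [/eqP E0 /eqP E1].
move/eqP: E1; rewrite mulf_eq0 (negbTE I_neq0) /= => /eqP E1.
move/rC_inj: E0 => E0; move/rC_inj: E1 => E1.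
have := cos2Dsin2 α; rewrite E0 E1 expr0n /= addr0 => /eqP.
by rewrite eq_sym oner_eq0.
Qed.

Lemma par {x0 x1 : C} : x0 * e1 = x1 * e0 -> exists mu, x0 = mu * e0 /\ x1 = mu * e1.
Proof.
move=> h; have [E0|E0] := eqVneq e0 0.
  have E1 : e1 != 0 by move: e_nz; rewrite E0 eqxx.
  exists (x1 / e1); split; last by rewrite divfK.
  by move/eqP: h; rewrite E0 !mulr0 mulf_eq0 (negbTE E1) orbF => /eqP.
by exists (x0 / e0); split; [rewrite divfK | rewrite mulrAC h mulfK].
Qed.

Lemma nz_prod (b0 b1 g0 g1 : C) : (b0 != 0) || (b1 != 0) -> (g0 != 0) || (g1 != 0) ->
  b0*g0 = 0 -> b1*g1 = 0 -> b1*g0 = 0 -> b0*g1 = 0 -> False.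
Proof.
move=> hb hg /eqP p1 /eqP p2 /eqP p3 /eqP p4; move: hb hg p1 p2 p3 p4; rewrite !mulf_eq0.
by case: (b0 == 0); case: (b1 == 0); case: (g0 == 0); case: (g1 == 0).
Qed.

Lemma Pr_realizes (β γ : 'I_2 -> 'cV[C]_2) (j k : 'I_2) :
  (conjc (β j 0 0) != 0) || (conjc (β j 1 0) != 0) ->
  (conjc (γ k 0 0) != 0) || (conjc (γ k 1 0) != 0) ->
  Pr (conjc (β j 0 0)) (conjc (β j 1 0)) (conjc (γ k 0 0)) (conjc (γ k 1 0)) ->
  realizes sg β γ α j k.
Proof.
set b0 := conjc (β j 0 0); set b1 := conjc (β j 1 0).
set g0 := conjc (γ k 0 0); set g1 := conjc (γ k 1 0).
move=> hb hg [p1 p2].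
have [mA [hA0 hA1]] := par p1.
have [mB [hB0 hB1]] := par p2.
exists (\col_i (2^-1 * ket_plus R i 0 * mA + 2^-1 * ket_minus R i 0 * mB)), 1.
split; [|split; [exact: oner_neq0|]].
- apply/negP => /eqP /matrixP Hc.
  have c0 : 2^-1 * hh * mA + 2^-1 * hh * mB = 0 by move: (Hc 0 0); rewrite !mxE /hh => ->.
  have c1 : 2^-1 * hh * mA + 2^-1 * - hh * mB = 0 by move: (Hc 1 0); rewrite !mxE /hh => ->.
  have qn : 2^-1 * hh != 0 by rewrite mulf_eq0 negb_or invr_eq0 two_neq0 hh_neq0.
  have t1 : hh * mA = 0 by eapply (lc2 1 1 c0 c1); field.
  have t2 : hh * mB = 0 by eapply (lc2 1 (-1) c0 c1); field.
  move/eqP: t1; rewrite !mulf_eq0 (negbTE hh_neq0) /= => /eqP mA0.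
  move/eqP: t2; rewrite !mulf_eq0 (negbTE hh_neq0) /= => /eqP mB0.
  apply: (nz_prod _ _ _ _ hb hg); by rewrite ?hA0 ?hA1 ?hB0 ?hB1 ?mA0 ?mB0 mul0r.
- move=> i; rewrite /residual /exp_i_sigma !coefE -/b0 -/b1 -/g0 -/g1.
  rewrite hA0 hA1 hB0 hB1.
  have -> : (\col_i0 (2^-1 * ket_plus R i0 0 * mA + 2^-1 * ket_minus R i0 0 * mB)) i 0 =
     2^-1 * ket_plus R i 0 * mA + 2^-1 * ket_minus R i 0 * mB by rewrite !mxE.
  move: (ket_plus R i 0) (ket_minus R i 0) => u v.
  rewrite comb comb1 mulr1; congr (_ *: _ + _ *: _); ring.
Qed.

Lemma lc3 (c1 c2 c3 : C) {a1 b1 a2 b2 a3 b3 g1 g2 : C} : a1 = b1 -> a2 = b2 -> a3 = b3 ->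
  g1 - g2 = c1 * (a1 - b1) + c2 * (a2 - b2) + c3 * (a3 - b3) -> g1 = g2.
Proof. by move=> -> -> ->; rewrite !subrr !mulr0 !addr0 => /eqP; rewrite subr_eq0 => /eqP. Qed.

Lemma b_zero {b0 b1 : C} : (b0 != 0) || (b1 != 0) ->
  b0 * e1 = 0 -> b1 * e0 = 0 -> b1 * e1 = 0 -> b0 * e0 = 0 -> False.
Proof.
move=> hb /eqP p1 /eqP p2 /eqP p3 /eqP p4; move: e_nz hb p1 p2 p3 p4.
generalize e0 e1 => E0 E1; rewrite !mulf_eq0.
by case: (b0 == 0); case: (b1 == 0); case: (E0 == 0); case: (E1 == 0).
Qed.

Lemma Pr_row {b0 b1 g0 g1 g0' g1' : C} : (b0 != 0) || (b1 != 0) ->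
  Pr b0 b1 g0 g1 -> Pr b0 b1 g0' g1' -> g0 * g1' - g1 * g0' = 0.
Proof.
move=> hb [p1 p2] [q1 q2].
apply/eqP/negPn/negP => Dn.
have z : forall a : C, a * (g0 * g1' - g1 * g0') = 0 -> a = 0.
  by move=> a /eqP; rewrite mulf_eq0 (negbTE Dn) orbF => /eqP.
apply: (b_zero hb); apply: z.
- by eapply (lc2 g1' (-g1) p1 q1); ring.
- by eapply (lc2 g0' (-g0) p1 q1); ring.
- by eapply (lc2 g1' (-g1) p2 q2); ring.
- by eapply (lc2 g0' (-g0) p2 q2); ring.
Qed.

Lemma on_nz (u : 'cV[C]_2) : braket u u = 1 -> (conjc (u 0 0) != 0) || (conjc (u 1 0) != 0).
Proof.
rewrite /braket sum2 => N; rewrite -negb_and; apply/negP => /andP [/eqP E0 /eqP E1].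
by move: N; rewrite E0 E1 !mul0r addr0 => /eqP; rewrite eq_sym oner_eq0.
Qed.

Lemma on_det (u v : 'cV[C]_2) : braket u u = 1 -> braket v v = 1 -> braket u v = 0 ->
  conjc (u 0 0) * conjc (v 1 0) - conjc (u 1 0) * conjc (v 0 0) != 0.
Proof.
rewrite /braket !sum2 => N1 N2 O; apply/eqP => D.
have key : (conjc (u 0 0) * conjc (v 1 0) - conjc (u 1 0) * conjc (v 0 0)) *
    (u 0 0 * v 1 0 - u 1 0 * v 0 0) +
    (conjc (u 0 0) * v 0 0 + conjc (u 1 0) * v 1 0) *
    (u 0 0 * conjc (v 0 0) + u 1 0 * conjc (v 1 0)) =
    (conjc (u 0 0) * u 0 0 + conjc (u 1 0) * u 1 0) *
    (conjc (v 0 0) * v 0 0 + conjc (v 1 0) * v 1 0) by ring.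
move: key; rewrite D O N1 N2 !mul0r addr0 mulr1 => /eqP; rewrite eq_sym oner_eq0.
done.
Qed.

Lemma g1_nz {b0 b1 g0 g1 : C} : e1 != 0 -> (b0 != 0) || (b1 != 0) -> (g0 != 0) || (g1 != 0) ->
  Pr b0 b1 g0 g1 -> g1 != 0.
Proof.
move=> e1n hb hg [p1 p2]; apply/negP => /eqP G1.
move: p1 p2; rewrite G1 !mulr0 !mul0r => /eqP p1 /eqP p2.
move: e1n hb hg p1 p2; rewrite G1 eqxx orbF.
generalize e1 => E1; rewrite !mulf_eq0.
by case: (b0 == 0); case: (b1 == 0); case: (g0 == 0); case: (E1 == 0).
Qed.

Lemma Pr_col {b0 b1 b0' b1' g0 g1 : C} : e0 != 0 -> e1 != 0 ->
  (b0 != 0) || (b1 != 0) -> (g0 != 0) || (g1 != 0) ->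
  Pr b0 b1 g0 g1 -> Pr b0' b1' g0 g1 -> b0 * b1' - b1 * b0' = 0.
Proof.
move=> e0n e1n hb hg P1 P2.
have g1n := g1_nz e1n hb hg P1.
case: P1 P2 => p1 p2 [q1 q2].
have t : (b0 * b1' - b1 * b0') * (g1 * e0) = 0 by eapply (lc2 b0' (-b0) p1 q1); ring.
by move/eqP: t; rewrite !mulf_eq0 (negbTE g1n) (negbTE e0n) !orbF => /eqP.
Qed.

Lemma sign {b0 b1 g0 g1 : C} : e0 != 0 -> e1 != 0 ->
  (b0 != 0) || (b1 != 0) -> (g0 != 0) || (g1 != 0) -> Pr b0 b1 g0 g1 ->
  (g0 * e1 = g1 * e0 /\ b0 = b1) \/ (g0 * e1 = - (g1 * e0) /\ b1 = - b0).
Proof.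
move=> e0n e1n hb hg P1.
have g1n := g1_nz e1n hb hg P1.
case: P1 => p1 p2.
have Yn : g1 * e0 != 0 by rewrite mulf_neq0.
have t0 : b0 * ((g0 * e1 - g1 * e0) * (g0 * e1 + g1 * e0)) = 0.
  by eapply (lc2 (g0 * e1) (g1 * e0) p1 p2); ring.
have t1 : b1 * ((g0 * e1 - g1 * e0) * (g0 * e1 + g1 * e0)) = 0.
  by eapply (lc2 (g1 * e0) (g0 * e1) p1 p2); ring.
have t : (g0 * e1 - g1 * e0) * (g0 * e1 + g1 * e0) = 0.
  move: hb t0 t1; case: (eqVneq b0 0) => [->|b0n] /=.
    by move=> b1n _ /eqP; rewrite mulf_eq0 (negbTE b1n) /= => /eqP.
  by move=> _ /eqP; rewrite mulf_eq0 (negbTE b0n) /= => /eqP.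
move/eqP: t; rewrite mulf_eq0 => /orP [] /eqP h.
  left; have hXY : g0 * e1 = g1 * e0 by apply/eqP; rewrite -subr_eq0 h.
  split=> //.
  have u : (b0 - b1) * (g1 * e0) = 0 by eapply (lc2 1 (-b0) p1 h); ring.
  by move/eqP: u; rewrite mulf_eq0 (negbTE Yn) orbF subr_eq0 => /eqP.
right; have hXY : g0 * e1 = - (g1 * e0) by apply/eqP; rewrite -subr_eq0 opprK h.
split=> //.
have u : (b1 + b0) * (g1 * e0) = 0 by eapply (lc2 (-1) b0 p1 h); ring.
by move/eqP: u; rewrite mulf_eq0 (negbTE Yn) orbF addr_eq0 => /eqP.
Qed.

Lemma opp_case {g0 g1 g0' g1' : C} : g0 * e1 = g1 * e0 -> g0' * e1 = - (g1' * e0) ->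
  g0 * conjc g0' + g1 * conjc g1' = 0 ->
  g0 * conjc g0' * (e0 * conjc e0 - e1 * conjc e1) = 0.
Proof.
move: (e0) (e1) => E0 E1 h h' O.
have h'c := congr1 conjc h'; rewrite rmorphN !rmorphM in h'c.
by eapply (lc3 (E0 * conjc E0) (conjc g1' * conjc E0) (- (g0 * E1)) O h h'c); ring.
Qed.

Lemma g0_nz {g0 g1 : C} : e0 != 0 -> g1 != 0 -> g0 * e1 = g1 * e0 \/ g0 * e1 = - (g1 * e0) -> g0 != 0.
Proof.
move=> e0n g1n h; apply/negP => /eqP G0; move: h; rewrite G0 mul0r.
have Yn : g1 * e0 != 0 by rewrite mulf_neq0.
by case=> /eqP; rewrite eq_sym ?oppr_eq0 (negbTE Yn).
Qed.

Lemma Pr_diag {b0 b1 b0' b1' g0 g1 g0' g1' : C} : e0 != 0 -> e1 != 0 ->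
  e0 * conjc e0 - e1 * conjc e1 != 0 ->
  (b0 != 0) || (b1 != 0) -> (g0 != 0) || (g1 != 0) ->
  (b0' != 0) || (b1' != 0) -> (g0' != 0) || (g1' != 0) ->
  Pr b0 b1 g0 g1 -> Pr b0' b1' g0' g1' -> b0 * b1' - b1 * b0' != 0 ->
  g0 * conjc g0' + g1 * conjc g1' = 0 -> False.
Proof.
move=> e0n e1n Kn hb hg hb' hg' P1 P2 D O.
have g1n := g1_nz e1n hb hg P1; have g1n' := g1_nz e1n hb' hg' P2.
have [[s1 bb]|[s1 bb]] := sign e0n e1n hb hg P1;
have [[s2 bb']|[s2 bb']] := sign e0n e1n hb' hg' P2.
- by move: D; rewrite -bb -bb' mulrC subrr eqxx.
- have := opp_case s1 s2 O.
  have g0n : g0 != 0 by apply: (g0_nz e0n g1n); left.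
  have g0n' : g0' != 0 by apply: (g0_nz e0n g1n'); right.
  by move/eqP; rewrite !mulf_eq0 conjc_eq0 (negbTE g0n) (negbTE g0n') (negbTE Kn).
- have O' : g0' * conjc g0 + g1' * conjc g1 = 0.
    by have := congr1 conjc O; rewrite rmorph0 rmorphD !rmorphM /= !conjcK => <-; ring.
  have := opp_case s2 s1 O'.
  have g0n : g0 != 0 by apply: (g0_nz e0n g1n); right.
  have g0n' : g0' != 0 by apply: (g0_nz e0n g1n'); left.
  by move/eqP; rewrite !mulf_eq0 conjc_eq0 (negbTE g0n) (negbTE g0n') (negbTE Kn).
- by move: D; rewrite bb bb' mulrN mulNr opprK addNr eqxx.
Qed.

Lemma sum2R (F : 'I_2 -> R) : \sum_(i < 2) F i = F 0 + F 1.
Proof. rewrite big_ord_recl big_ord1; congr (_ + F _); exact: val_inj. Qed.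

Lemma sqmodM (x y : C) : sqmod (x * y) = sqmod x * sqmod y.
Proof. case: x => a b; case: y => c d; rewrite /sqmod /=; ring. Qed.
Lemma sqmodJ (x : C) : sqmod (conjc x) = sqmod x.
Proof. case: x => a b; rewrite /sqmod /=; ring. Qed.
Lemma Re_norm (x y : C) : complex.Re (conjc x * x + conjc y * y) = sqmod x + sqmod y.
Proof. case: x => a b; case: y => c d; rewrite /sqmod /=; ring. Qed.

Lemma norm_sq (u : 'cV[C]_2) : braket u u = 1 -> sqmod (conjc (u 0 0)) + sqmod (conjc (u 1 0)) = 1.
Proof. by rewrite /braket sum2 !sqmodJ => /(congr1 (@complex.Re R)); rewrite Re_norm. Qed.

Lemma probE (β γ : 'I_2 -> 'cV[C]_2) j k : orthonormal_basis β -> orthonormal_basis γ ->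
  prob β γ j k = 4^-1.
Proof.
move=> ob og; rewrite /prob !sum2R !coefE !sqmodM.
have h1 := ob j j; rewrite eqxx in h1; move/norm_sq: h1 => h1.
have h2 := og k k; rewrite eqxx in h2; move/norm_sq: h2 => h2.
have -> : sqmod (conjc (β j 0 0)) = 1 - sqmod (conjc (β j 1 0)) by rewrite -h1 addrK.
have -> : sqmod (conjc (γ k 0 0)) = 1 - sqmod (conjc (γ k 1 0)) by rewrite -h2 addrK.
ring.
Qed.

Lemma ob_nz {β : 'I_2 -> 'cV[C]_2} j : orthonormal_basis β ->
  (conjc (β j 0 0) != 0) || (conjc (β j 1 0) != 0).
Proof. by move=> ob; apply: on_nz; rewrite ob eqxx. Qed.

Lemma ob_det {β : 'I_2 -> 'cV[C]_2} : orthonormal_basis β ->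
  conjc (β 0 0 0) * conjc (β 1 1 0) - conjc (β 0 1 0) * conjc (β 1 0 0) != 0.
Proof. by move=> ob; apply: on_det; rewrite ob. Qed.

Lemma R_row (β γ : 'I_2 -> 'cV[C]_2) j : orthonormal_basis β -> orthonormal_basis γ ->
  realizes sg β γ α j 0 -> realizes sg β γ α j 1 -> False.
Proof.
move=> ob og /realizes_Pr P1 /realizes_Pr P2.
by move: (ob_det og); rewrite (Pr_row (ob_nz j ob) P1 P2) eqxx.
Qed.

Lemma R_col (β γ : 'I_2 -> 'cV[C]_2) k : orthonormal_basis β -> orthonormal_basis γ ->
  e0 != 0 -> e1 != 0 ->
  realizes sg β γ α 0 k -> realizes sg β γ α 1 k -> False.
Proof.
move=> ob og e0n e1n /realizes_Pr P1 /realizes_Pr P2.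
by move: (ob_det ob); rewrite (Pr_col e0n e1n (ob_nz 0 ob) (ob_nz k og) P1 P2) eqxx.
Qed.

Lemma R_diag (β γ : 'I_2 -> 'cV[C]_2) k k' : orthonormal_basis β -> orthonormal_basis γ ->
  k != k' -> e0 != 0 -> e1 != 0 -> e0 * conjc e0 - e1 * conjc e1 != 0 ->
  realizes sg β γ α 0 k -> realizes sg β γ α 1 k' -> False.
Proof.
move=> ob og kk e0n e1n Kn /realizes_Pr P1 /realizes_Pr P2.
apply: (Pr_diag e0n e1n Kn (ob_nz 0 ob) (ob_nz k og) (ob_nz 1 ob) (ob_nz k' og) P1 P2 (ob_det ob)).
have := og k k'; rewrite (negbTE kk) /braket sum2 !conjcK => ->.
done.
Qed.

Definition F4 (P00 P01 P10 P11 : Prop) (q : R) :=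
  (if `[< P00 >] then q else 0) + (if `[< P01 >] then q else 0) +
  (if `[< P10 >] then q else 0) + (if `[< P11 >] then q else 0).
Lemma count_half (P00 P01 P10 P11 : Prop) (q : R) : 0 <= q ->
  (P00 -> P01 -> False) -> (P10 -> P11 -> False) -> F4 P00 P01 P10 P11 q <= q + q.
Proof.
move=> q0 r0 r1; rewrite /F4.
case: asboolP => h00; case: asboolP => h01; case: asboolP => h10; case: asboolP => h11;
  try lra; exfalso; by [apply: r0 | apply: r1].
Qed.
Lemma count_quarter (P00 P01 P10 P11 : Prop) (q : R) : 0 <= q ->
  (P00 -> P01 -> False) -> (P10 -> P11 -> False) ->
  (P00 -> P10 -> False) -> (P01 -> P11 -> False) ->
  (P00 -> P11 -> False) -> (P01 -> P10 -> False) -> F4 P00 P01 P10 P11 q <= q.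
Proof.
move=> q0 r0 r1 c0 c1 d0 d1; rewrite /F4.
case: asboolP => h00; case: asboolP => h01; case: asboolP => h10; case: asboolP => h11;
  try lra; exfalso; by [apply: r0 | apply: r1 | apply: c0 | apply: c1 | apply: d0 | apply: d1].
Qed.
Lemma count_ge1 (P00 P01 P10 P11 : Prop) (q : R) : 0 <= q -> P00 -> q <= F4 P00 P01 P10 P11 q.
Proof.
move=> q0 h00; rewrite /F4.
case: asboolP => // _; case: asboolP => _; case: asboolP => _; case: asboolP => _; lra.
Qed.
Lemma count_ge2 (P00 P01 P10 P11 : Prop) (q : R) : 0 <= q -> P00 -> (P10 \/ P11) -> q + q <= F4 P00 P01 P10 P11 q.
Proof.
move=> q0 h00 h; rewrite /F4.
case: asboolP => // _; case: asboolP => _; case: asboolP => h10; case: asboolP => h11; try lra.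
by case: h.
Qed.

Lemma srE (β γ : 'I_2 -> 'cV[C]_2) : orthonormal_basis β -> orthonormal_basis γ ->
  success_rate sg β γ α = F4 (realizes sg β γ α 0 0) (realizes sg β γ α 0 1)
    (realizes sg β γ α 1 0) (realizes sg β γ α 1 1) 4^-1.
Proof.
move=> ob og; rewrite /success_rate !sum2R !probE // addrA; reflexivity.
Qed.

Lemma sr_half (β γ : 'I_2 -> 'cV[C]_2) : orthonormal_basis β -> orthonormal_basis γ ->
  success_rate sg β γ α <= 2^-1.
Proof.
move=> ob og; rewrite srE //.
have -> : (2^-1 : R) = 4^-1 + 4^-1 by field.
apply: count_half; first by rewrite invr_ge0 ler0n.
- exact: R_row.
- exact: R_row.
Qed.

Lemma sr_quarter (β γ : 'I_2 -> 'cV[C]_2) : orthonormal_basis β -> orthonormal_basis γ ->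
  e0 != 0 -> e1 != 0 -> e0 * conjc e0 - e1 * conjc e1 != 0 ->
  success_rate sg β γ α <= 4^-1.
Proof.
move=> ob og e0n e1n Kn; rewrite srE //.
apply: count_quarter; first by rewrite invr_ge0 ler0n.
- exact: R_row.
- exact: R_row.
- exact: R_col.
- exact: R_col.
- exact: (R_diag β γ 0 1 ob og isT e0n e1n Kn).
- exact: (R_diag β γ 1 0 ob og isT e0n e1n Kn).
Qed.
Lemma ord2 (j : 'I_2) : j = 0 \/ j = 1.
Proof. by case: j => -[|[|//]] p; [left|right]; apply: val_inj. Qed.

Lemma conj_hh : conjc hh = hh.
Proof. by rewrite /hh conjc_inv conj_rC. Qed.
Lemma ce0 : conjc e0 = e0. Proof. exact: conj_rC. Qed.
Lemma ce1 : conjc e1 = - e1.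
Proof. by rewrite /iC /rC; simpc. Qed.
Lemma nrm : e0 * e0 - e1 * e1 = 1.
Proof.
have h : e0 * e0 - e1 * e1 = rC (cos α ^+ 2 + sin α ^+ 2).
  rewrite rCD !expr2 !rCM; have := I2; move: (I) => J h; eapply (lc1 (- (rC (sin α) * rC (sin α))) h); ring.
by rewrite h cos2Dsin2.
Qed.

Definition bpm : 'I_2 -> 'cV[C]_2 := fun j => if j == 0 then ket_plus R else ket_minus R.
Definition gam : 'I_2 -> 'cV[C]_2 := fun k =>
  if k == 0 then \col_i (if i == 0 then e0 else - e1) else \col_i (if i == 0 then e1 else - e0).

Lemma half : (2%:R^-1 + 2%:R^-1 : C) = 1.
Proof. by field. Qed.
Lemma conjN (x : C) : conjc (- x) = - conjc x. Proof. by rewrite rmorphN. Qed.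
Lemma o10 : ((1 : 'I_2) == 0) = false. Proof. by []. Qed.
Lemma o01 : ((0 : 'I_2) == 1) = false. Proof. by []. Qed.

Lemma ob_bpm : orthonormal_basis bpm.
Proof.
move=> j k; case: (ord2 j) => ->; case: (ord2 k) => ->;
  rewrite /bpm /braket sum2 ?eqxx ?o10 ?o01 ?kpE ?km0E ?km1E ?conjN ?conj_hh.
- by rewrite hh2 half.
- by rewrite mulrN subrr.
- by rewrite mulNr subrr.
- by rewrite mulrNN hh2 half.
Qed.

Lemma ob_gam : orthonormal_basis gam.
Proof.
move=> j k; case: (ord2 j) => ->; case: (ord2 k) => ->;
  rewrite /gam /braket sum2 ?eqxx ?o10 ?o01 !mxE ?eqxx ?o10 ?o01 ?conjN ?ce0 ?ce1.
- by eapply (lc1 1 nrm); ring.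
- by ring.
- by ring.
- by eapply (lc1 1 nrm); ring.
Qed.

Lemma bpm0 : bpm 0 = ket_plus R. Proof. by []. Qed.
Lemma bpm1 : bpm 1 = ket_minus R. Proof. by []. Qed.
Lemma gam0 : gam 0 = \col_i (if i == 0 then e0 else - e1). Proof. by []. Qed.
Lemma gam1 : gam 1 = \col_i (if i == 0 then e1 else - e0). Proof. by []. Qed.

Lemma real00 : realizes sg bpm gam α 0 0.
Proof.
apply: Pr_realizes; rewrite ?bpm0 ?gam0 ?kpE ?mxE ?eqxx ?o10 ?conjN ?conj_hh ?ce0 ?ce1 ?opprK.
- by rewrite hh_neq0.
- exact: e_nz.
- by split; ring.
Qed.

Lemma real10 : e0 * e1 = 0 -> realizes sg bpm gam α 1 0.
Proof.
move=> H.
apply: Pr_realizes; rewrite ?bpm1 ?gam0 ?km0E ?km1E ?mxE ?eqxx ?o10 ?conjN ?conj_hh ?ce0 ?ce1 ?opprK.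
- by rewrite hh_neq0.
- exact: e_nz.
- by split; [eapply (lc1 (2%:R * hh) H) | eapply (lc1 (- (2%:R * hh)) H)]; ring.
Qed.

Lemma real11 : rC (cos α) * rC (cos α) = rC (sin α) * rC (sin α) -> realizes sg bpm gam α 1 1.
Proof.
move=> H.
apply: Pr_realizes; rewrite ?bpm1 ?gam1 ?km0E ?km1E ?mxE ?eqxx ?o10 ?conjN ?conj_hh ?ce0 ?ce1 ?opprK.
- by rewrite hh_neq0.
- by rewrite !oppr_eq0 orbC; exact: e_nz.
- split.
  + by eapply (lc2 (- (hh * rC (sin α) * rC (sin α))) (- hh) I2 H); ring.
  + by eapply (lc2 (hh * rC (sin α) * rC (sin α)) hh I2 H); ring.
Qed.

Lemma rCN (x : R) : rC (- x) = - rC x.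
Proof. by change (real_complex R (- x) = - real_complex R x); rewrite rmorphN. Qed.

Lemma max_special : (e0 * e1 = 0 \/ rC (cos α) * rC (cos α) = rC (sin α) * rC (sin α)) ->
  max_success_rate sg α (2^-1).
Proof.
move=> H; split; last by move=> β γ ob og; exact: sr_half.
exists bpm, gam; split; first exact: ob_bpm.
split; first exact: ob_gam.
apply/le_anti/andP; split; first exact: (sr_half _ _ ob_bpm ob_gam).
rewrite (srE _ _ ob_bpm ob_gam).
have -> : (2^-1 : R) = 4^-1 + 4^-1 by field.
apply: count_ge2; first by rewrite invr_ge0 ler0n.
- exact: real00.
- by case: H => H; [left; exact: real10 | right; exact: real11].
Qed.

Lemma max_generic : cos α != 0 -> sin α != 0 -> cos α ^+ 2 != sin α ^+ 2 ->
  max_success_rate sg α (4^-1).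
Proof.
move=> cn sn csn.
have e0n : e0 != 0 by apply/negP => /eqP /rC_inj E; move: cn; rewrite E eqxx.
have e1n : e1 != 0.
  by rewrite mulf_neq0 ?I_neq0 //; apply/negP => /eqP /rC_inj E; move: sn; rewrite E eqxx.
have Kn : e0 * conjc e0 - e1 * conjc e1 != 0.
  have -> : e0 * conjc e0 - e1 * conjc e1 = rC (cos α ^+ 2 - sin α ^+ 2).
    rewrite ce0 ce1 rCD rCN !expr2 !rCM.
    by eapply (lc1 (rC (sin α) * rC (sin α)) I2); ring.
  apply/negP => /eqP /rC_inj E; move: csn; rewrite -subr_eq0 E eqxx.
  done.
split; last by move=> β γ ob og; exact: sr_quarter.
exists bpm, gam; split; first exact: ob_bpm.
split; first exact: ob_gam.
apply/le_anti/andP; split; first exact: (sr_quarter _ _ ob_bpm ob_gam e0n e1n Kn).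
rewrite (srE _ _ ob_bpm ob_gam).
apply: count_ge1; first by rewrite invr_ge0 ler0n.
exact: real00.
Qed.
End P.

Lemma sin4 (R : realType) (x : R) : sin (4 * x) = 4 * sin x * cos x * (cos x ^+ 2 - sin x ^+ 2).
Proof.
have -> : 4 * x = (x + x) + (x + x) by ring.
rewrite !sinD !cosD; ring.
Qed.

Lemma sin_natpi (R : realType) (m : nat) : sin (m%:R * pi) = 0 :> R.
Proof.
elim: m => [|m IH]; first by rewrite mul0r sin0.
by rewrite -addn1 natrD mulrDl mul1r sinD IH sinpi mul0r mulr0 addr0.
Qed.

Lemma cos_natpi (R : realType) (m : nat) : cos (m%:R * pi) != 0 :> R.
Proof.
apply/eqP => c0; have := sin0cos1 (sin_natpi R m).
by rewrite c0 normr0 => /eqP; rewrite eq_sym oner_eq0.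
Qed.

Lemma special_trig (R : realType) (alpha : R) (m : nat) : alpha = m%:R * pi / 4 ->
  sin alpha = 0 \/ cos alpha = 0 \/ cos alpha ^+ 2 = sin alpha ^+ 2.
Proof.
move=> ha.
have : sin (4 * alpha) = 0 by rewrite ha (_ : 4 * (m%:R * pi / 4) = m%:R * pi) ?sin_natpi //; field.
rewrite sin4 => /eqP; rewrite !mulf_eq0 pnatr_eq0 /= -orbA => /or3P [/eqP|/eqP|/eqP] h.
- by left.
- by right; left.
- by right; right; apply/eqP; rewrite -subr_eq0 h.
Qed.

Lemma generic_trig (R : realType) (alpha : R) (m : nat) :
  m%:R * pi / 4 < alpha < m.+1%:R * pi / 4 ->
  [/\ cos alpha != 0, sin alpha != 0 & cos alpha ^+ 2 != sin alpha ^+ 2].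
Proof.
have -> : m.+1%:R * pi / 4 = m%:R * pi / 4 + pi / 4 :> R.
  by rewrite -addn1 natrD; ring.
move=> /andP [h1 h2].
set P := m%:R * pi in h1 h2.
have hy : 0 < 4 * alpha - P < pi by apply/andP; split; lra.
have hs : sin (4 * alpha) != 0.
  have -> : 4 * alpha = P + (4 * alpha - P) by ring.
  rewrite sinD sin_natpi mul0r add0r mulf_neq0 ?cos_natpi //.
  by rewrite gt_eqF // sin_gt0_pi.
move: hs; rewrite sin4 !mulf_eq0 pnatr_eq0 /= -orbA negb_or negb_or subr_eq0.
by case/and3P => -> -> ->.
Qed.

Theorem proposition2 (R : realType) (nx ny nz : R) (alpha : R) :
  nx ^+ 2 + ny ^+ 2 + nz ^+ 2 = 1 ->
  0 <= alpha -> alpha < 2 * pi ->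
  ((exists m : 'I_8, alpha = m%:R * pi / 4) ->
     max_success_rate (sigma_n nx ny nz) alpha (2%:R^-1)) /\
  ((exists m : 'I_8, m%:R * pi / 4 < alpha < m.+1%:R * pi / 4) ->
     max_success_rate (sigma_n nx ny nz) alpha (4%:R^-1)).
Proof.
move=> hn _ _; split.
- case=> m ha; apply: (@max_special R nx ny nz hn alpha).
  case: (special_trig _ _ _ ha) => [s0|[c0|cs]].
  + by left; rewrite s0 rC0 !mulr0.
  + by left; rewrite c0 rC0 mul0r.
  + by right; rewrite -!rCM -!expr2 cs.
- case=> m hm; case: (generic_trig _ _ _ hm) => cn sn csn.
  exact: (@max_generic R nx ny nz hn alpha cn sn csn).
Qed.
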